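(* There is a c.e. set $A\subseteq\omega$ such that the density of $A$ exists, yet for every $\Pi^0_1$ subset $B$ of $A$ we have $\underline{\rho}(A\setminus B)>0$, and hence $d(A,B)>0$.
   Context: For $S\subseteq\omega$ and $n>0$, $\rho_n(S)=|S\cap[0,n)|/n$; $\underline{\rho}(S)=\liminf_n\rho_n(S)$, and the density is $\lim_n\rho_n(S)$ when it exists. For $A,B\subseteq\omega$, $d(A,B)=\underline{\rho}(A\triangle B)$. *)

(* Defs.v *)
From Stdlib Require Import Reals List Arith.
From Coquelicot Require Import Coquelicot.
Import ListNotations.
Local Open Scope nat_scope.

Definition natset := nat -> bool.

Inductive PR : Type :=
  | PRzero : PR
  | PRsucc : PR
  | PRproj : nat -> PR             (* i-th argument (0 if absent) *)
  | PRcomp : PR -> list PR -> PR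
  | PRrec  : PR -> PR -> PR.       (* primitive recursion on the first arg *)

Fixpoint pr_eval (p : PR) (xs : list nat) {struct p} : nat :=
  match p with
  | PRzero => 0
  | PRsucc => S (hd 0 xs)
  | PRproj i => nth i xs 0
  | PRcomp f gs =>
      pr_eval f ((fix ev (l : list PR) : list nat :=
                    match l with
                    | [] => []
                    | g :: l' => pr_eval g xs :: ev l'
                    end) gs)
  | PRrec f g =>
      let ys := tl xs in
      (fix h (n : nat) : nat :=
         match n with
         | O => pr_eval f ys
         | S m => pr_eval g (m :: h m :: ys)
         end) (hd 0 xs)
  end.

(* Sigma^0_1 (= computably enumerable) and Pi^0_1 subsets of omega,
   via primitive recursive matrices (Kleene normal form). *)
Definition ce (A : natset) : Prop :=
  exists p : PR, forall n, A n = true <-> exists m, pr_eval p [n; m] <> 0%nat.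

Definition Pi01 (B : natset) : Prop :=
  exists p : PR, forall n, B n = true <-> forall m, pr_eval p [n; m] <> 0%nat.

Open Scope R_scope.
Fixpoint count_below (X : natset) (n : nat) : nat :=
  match n with
  | O => O
  | Datatypes.S k => (count_below X k + (if X k then 1 else 0))%nat
  end.

Definition rho (S : natset) (n : nat) : R := INR (count_below S n) / INR n.

(* the sequence (rho_n(S))_{n >= 1}, reindexed from 0 *)
Definition rho_seq (S : natset) : nat -> R := fun k => rho S (Datatypes.S k).

Definition lower_density (S : natset) : Rbar := LimInf_seq (rho_seq S).

Definition has_density (S : natset) : Prop := ex_finite_lim_seq (rho_seq S).

Definition setminus (A B : natset) : natset := fun n => andb (A n) (negb (B n)).
Definition symdiff (A B : natset) : natset := fun n => xorb (A n) (B n).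
Definition subset (B A : natset) : Prop := forall n, B n = true -> A n = true.

Definition dens_dist (A B : natset) : Rbar := lower_density (symdiff A B).

(* Main.v *)
Require Import Defs.
From Stdlib Require Import Reals.
From Coquelicot Require Import Coquelicot.
From Stdlib Require Import Lra List Arith Lia Bool ClassicalEpsilon Classical.
Import ListNotations.


Local Open Scope nat_scope.


Lemma pr_eval_comp f gs xs :
  pr_eval (PRcomp f gs) xs = pr_eval f (map (fun g => pr_eval g xs) gs).
Proof. simpl. try (f_equal; induction gs; simpl; congruence). Qed.

Fixpoint reciter (b : nat) (s : nat -> nat -> nat) (n : nat) : nat :=
  match n with O => b | S m => s m (reciter b s m) end.

Lemma pr_eval_rec f g xs :
  pr_eval (PRrec f g) xs =
  reciter (pr_eval f (tl xs)) (fun m a => pr_eval g (m :: a :: tl xs)) (hd 0 xs).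
Proof. simpl. induction (hd 0 xs); simpl; congruence. Qed.

Lemma reciter_ext b s1 s2 n :
  (forall m a, s1 m a = s2 m a) -> reciter b s1 n = reciter b s2 n.
Proof. intros H; induction n; simpl; congruence. Qed.

Definition repr (k : nat) (f : list nat -> nat) : Prop :=
  exists p, forall e, length e = k -> pr_eval p e = f e.

Lemma repr_ext k f g : (forall e, length e = k -> f e = g e) -> repr k f -> repr k g.
Proof. intros H [p Hp]; exists p; intros e He; rewrite Hp; auto. Qed.

Lemma repr_var k j : repr k (fun e => nth j e 0).
Proof. exists (PRproj j); reflexivity. Qed.

Fixpoint constp (c : nat) : PR :=
  match c with O => PRzero | S c' => PRcomp PRsucc [constp c'] end.

Lemma repr_const k c : repr k (fun _ => c).
Proof. exists (constp c); intros e _; induction c; simpl; auto. Qed.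

Lemma repr_tl k j X : repr k (fun e => nth (S j) (X e) 0) -> repr k (fun e => nth j (tl (X e)) 0).
Proof. apply repr_ext; intros e _; destruct (X e); simpl; auto; destruct j; auto. Qed.

Lemma repr_comp k j h gs :
  repr j h -> length gs = j -> Forall (repr k) gs ->
  repr k (fun e => h (map (fun g => g e) gs)).
Proof.
  intros [ph Hh] Hl HF.
  assert (exists ps, length ps = length gs /\
            forall e, length e = k -> map (fun p => pr_eval p e) ps = map (fun g => g e) gs) as [ps [Hps1 Hps2]].
  { clear Hl. induction HF as [|g gs [pg Hg] _ [ps [H1 H2]]].
    - exists []; auto.
    - exists (pg :: ps); simpl; split; [congruence|]. intros e He; rewrite Hg, H2; auto. }
  exists (PRcomp ph ps); intros e He. rewrite pr_eval_comp, Hps2 by auto.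
  apply Hh. rewrite length_map; auto.
Qed.

Lemma repr_comp1 k h a : repr 1 (fun e => h (nth 0 e 0)) -> repr k a -> repr k (fun e => h (a e)).
Proof. intros H1 Ha. apply (repr_comp k 1 _ [a]) in H1; auto. Qed.

Lemma repr_comp2 k h a b : repr 2 (fun e => h (nth 0 e 0) (nth 1 e 0)) -> repr k a -> repr k b ->
  repr k (fun e => h (a e) (b e)).
Proof. intros H1 Ha Hb. apply (repr_comp k 2 _ [a;b]) in H1; auto. Qed.

Lemma repr_comp3 k h a b c : repr 3 (fun e => h (nth 0 e 0) (nth 1 e 0) (nth 2 e 0)) -> repr k a -> repr k b -> repr k c ->
  repr k (fun e => h (a e) (b e) (c e)).
Proof. intros H1 Ha Hb Hc. apply (repr_comp k 3 _ [a;b;c]) in H1; auto. Qed.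

Lemma repr_comp4 k h a b c d : repr 4 (fun e => h (nth 0 e 0) (nth 1 e 0) (nth 2 e 0) (nth 3 e 0)) -> repr k a -> repr k b -> repr k c -> repr k d ->
  repr k (fun e => h (a e) (b e) (c e) (d e)).
Proof. intros H1 Ha Hb Hc Hd. apply (repr_comp k 4 _ [a;b;c;d]) in H1; auto. Qed.

Lemma map_nth_seq (e : list nat) : map (fun i => nth i e 0) (seq 0 (length e)) = e.
Proof.
  induction e as [|x e IH]; simpl; auto. f_equal. rewrite <- seq_shift, map_map. simpl. exact IH.
Qed.

Lemma repr_rec k b base s :
  repr k b -> repr k base -> repr (S (S k)) (fun e => s (nth 0 e 0) (nth 1 e 0) (tl (tl e))) ->
  repr k (fun e => reciter (base e) (fun m a => s m a e) (b e)).
Proof.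
  intros [pb Hb] [pbase Hbase] [ps Hs].
  exists (PRcomp (PRrec pbase ps) (pb :: map PRproj (seq 0 k))).
  intros e He. transitivity (pr_eval (PRrec pbase ps) (b e :: e)).
  { rewrite pr_eval_comp. f_equal. simpl. rewrite Hb by auto. f_equal.
    rewrite map_map. simpl. rewrite <- He. apply map_nth_seq. }
  rewrite pr_eval_rec. simpl hd; simpl tl. rewrite Hbase by auto.
  apply reciter_ext. intros m a. rewrite Hs; simpl; auto.
Qed.

Lemma repr_succ : repr 1 (fun e => S (nth 0 e 0)).
Proof. exists PRsucc; intros [|x e] _; reflexivity. Qed.

Create HintDb prdb.
#[export] Hint Resolve repr_succ : prdb.

Ltac prim := cbv beta; match goal with
 | |- repr _ (fun _ => ?c) => apply repr_const
 | |- repr _ (fun e => nth _ e 0) => apply repr_var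
 | |- repr ?k (fun e => nth ?j (tl (@?X e)) 0) => apply (repr_tl k j X); prim
 | |- repr ?k (fun e => reciter (@?base e) (fun m a => @?s m a e) (@?b e)) =>
     apply (repr_rec k b base s); prim
 | |- repr ?k (fun e => ?f (@?a e) (@?b e) (@?c e) (@?d e)) =>
     apply (repr_comp4 k f a b c d); [solve [auto with prdb] | prim | prim | prim | prim]
 | |- repr ?k (fun e => ?f (@?a e) (@?b e) (@?c e)) =>
     apply (repr_comp3 k f a b c); [solve [auto with prdb] | prim | prim | prim]
 | |- repr ?k (fun e => ?f (@?a e) (@?b e)) =>
     apply (repr_comp2 k f a b); [solve [auto with prdb] | prim | prim]
 | |- repr ?k (fun e => ?f (@?a e)) =>
     apply (repr_comp1 k f a); [solve [auto with prdb] | prim]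
 end.

Lemma add_reciter x y : x + y = reciter y (fun _ a => S a) x.
Proof. induction x; simpl; auto. Qed.

Lemma repr_add : repr 2 (fun e => nth 0 e 0 + nth 1 e 0).
Proof. eapply repr_ext. intros e _. symmetry. apply add_reciter. prim. Qed.
#[export] Hint Resolve repr_add : prdb.

Definition ifz (c x y : nat) : nat := match c with O => x | S _ => y end.
Definition sg b := ifz b 0 1.
Definition orn a b := ifz a (sg b) 1.
Definition andn a b := ifz a 0 (sg b).
Definition notn a := ifz a 1 0.
Definition eqn a b := notn ((a - b) + (b - a)).
Definition ltn a b := sg (b - a).
Definition bexn n (P : nat -> nat) := reciter 0 (fun m a => orn a (P m)) n.
Definition ball n (P : nat -> nat) := reciter 1 (fun m a => andn a (P m)) n.
Definition bmin n (P : nat -> nat) := reciter 0 (fun m a => ifz (ltn a m) (ifz (P m) (S m) m) a) n.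

Lemma repr_pred : repr 1 (fun e => pred (nth 0 e 0)).
Proof. eapply repr_ext with (f := fun e => reciter 0 (fun m _ => m) (nth 0 e 0)).
  intros e _. destruct (nth 0 e 0); reflexivity. prim. Qed.
#[export] Hint Resolve repr_pred : prdb.

Lemma repr_sub : repr 2 (fun e => nth 0 e 0 - nth 1 e 0).
Proof. eapply repr_ext with (f := fun e => reciter (nth 0 e 0) (fun _ a => pred a) (nth 1 e 0)).
  intros e _. generalize (nth 0 e 0) (nth 1 e 0). intros x y; induction y; simpl; [lia|].
  rewrite IHy; lia. prim. Qed.
#[export] Hint Resolve repr_sub : prdb.

Lemma repr_mul : repr 2 (fun e => nth 0 e 0 * nth 1 e 0).
Proof. eapply repr_ext with (f := fun e => reciter 0 (fun _ a => a + nth 1 e 0) (nth 0 e 0)).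
  intros e _. generalize (nth 0 e 0) (nth 1 e 0). intros x y; induction x; simpl; [lia|].
  rewrite IHx; lia. prim. Qed.
#[export] Hint Resolve repr_mul : prdb.

Lemma repr_pow : repr 2 (fun e => nth 0 e 0 ^ nth 1 e 0).
Proof. eapply repr_ext with (f := fun e => reciter 1 (fun _ a => a * nth 0 e 0) (nth 1 e 0)).
  intros e _. generalize (nth 0 e 0) (nth 1 e 0). intros x y; induction y; simpl; [lia|].
  rewrite IHy; lia. prim. Qed.
#[export] Hint Resolve repr_pow : prdb.

Lemma repr_ifz : repr 3 (fun e => ifz (nth 0 e 0) (nth 1 e 0) (nth 2 e 0)).
Proof. eapply repr_ext with (f := fun e => reciter (nth 1 e 0) (fun _ _ => nth 2 e 0) (nth 0 e 0)).
  intros e _. destruct (nth 0 e 0); reflexivity. prim. Qed.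
#[export] Hint Resolve repr_ifz : prdb.

Ltac prim_def := eapply repr_ext; [intros ?e ?He; reflexivity|]; prim.

Lemma repr_sg : repr 1 (fun e => sg (nth 0 e 0)). Proof. unfold sg. prim. Qed.
#[export] Hint Resolve repr_sg : prdb.
Lemma repr_orn : repr 2 (fun e => orn (nth 0 e 0) (nth 1 e 0)). Proof. unfold orn. prim. Qed.
Lemma repr_andn : repr 2 (fun e => andn (nth 0 e 0) (nth 1 e 0)). Proof. unfold andn. prim. Qed.
Lemma repr_notn : repr 1 (fun e => notn (nth 0 e 0)). Proof. unfold notn. prim. Qed.
#[export] Hint Resolve repr_orn repr_andn repr_notn : prdb.
Lemma repr_eqn : repr 2 (fun e => eqn (nth 0 e 0) (nth 1 e 0)). Proof. unfold eqn. prim. Qed.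
Lemma repr_ltn : repr 2 (fun e => ltn (nth 0 e 0) (nth 1 e 0)). Proof. unfold ltn. prim. Qed.
#[export] Hint Resolve repr_eqn repr_ltn : prdb.

Ltac prim2 := cbv beta; match goal with
 | |- repr _ (fun _ => ?c) => apply repr_const
 | |- repr _ (fun e => nth _ e 0) => apply repr_var
 | |- repr ?k (fun e => nth ?j (tl (@?X e)) 0) => apply (repr_tl k j X); prim2
 | |- repr ?k (fun e => bexn (@?n e) (fun i => @?P i e)) => unfold bexn; prim2
 | |- repr ?k (fun e => ball (@?n e) (fun i => @?P i e)) => unfold ball; prim2
 | |- repr ?k (fun e => bmin (@?n e) (fun i => @?P i e)) => unfold bmin; prim2
 | |- repr ?k (fun e => reciter (@?base e) (fun m a => @?s m a e) (@?b e)) =>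
     apply (repr_rec k b base s); prim2
 | |- repr ?k (fun e => ?f (@?a e) (@?b e) (@?c e) (@?d e)) =>
     apply (repr_comp4 k f a b c d); [solve [auto with prdb] | prim2 | prim2 | prim2 | prim2]
 | |- repr ?k (fun e => ?f (@?a e) (@?b e) (@?c e)) =>
     apply (repr_comp3 k f a b c); [solve [auto with prdb] | prim2 | prim2 | prim2]
 | |- repr ?k (fun e => ?f (@?a e) (@?b e)) =>
     apply (repr_comp2 k f a b); [solve [auto with prdb] | prim2 | prim2]
 | |- repr ?k (fun e => ?f (@?a e)) =>
     apply (repr_comp1 k f a); [solve [auto with prdb] | prim2]
 end.

Lemma sg_spec b : sg b = if Nat.eqb b 0 then 0 else 1.
Proof. destruct b; reflexivity. Qed.

Lemma orn_nz a b : orn a b <> 0 <-> a <> 0 \/ b <> 0.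
Proof. destruct a, b; simpl; intuition lia. Qed.
Lemma andn_nz a b : andn a b <> 0 <-> a <> 0 /\ b <> 0.
Proof. destruct a, b; simpl; intuition lia. Qed.
Lemma notn_nz a : notn a <> 0 <-> a = 0.
Proof. destruct a; simpl; intuition lia. Qed.
Lemma eqn_nz a b : eqn a b <> 0 <-> a = b.
Proof. unfold eqn. rewrite notn_nz. lia. Qed.
Lemma ltn_nz a b : ltn a b <> 0 <-> a < b.
Proof. unfold ltn. destruct (b - a) eqn:E; simpl; lia. Qed.

Lemma bexn_nz n P : bexn n P <> 0 <-> exists i, i < n /\ P i <> 0.
Proof.
  induction n; unfold bexn in *; simpl.
  - split; [lia|]. intros [i [Hi _]]; lia.
  - rewrite orn_nz, IHn. split.
    + intros [[i [Hi Hp]]|Hp]; [exists i|exists n]; split; auto; lia.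
    + intros [i [Hi Hp]]. destruct (Nat.eq_dec i n); [subst; auto|left; exists i; split; auto; lia].
Qed.

Lemma ball_nz n P : ball n P <> 0 <-> forall i, i < n -> P i <> 0.
Proof.
  induction n; unfold ball in *; simpl.
  - split; intros; lia.
  - rewrite andn_nz, IHn. split.
    + intros [H1 H2] i Hi. destruct (Nat.eq_dec i n); [subst; auto|apply H1; lia].
    + intros H; split; [intros; apply H; lia|apply H; lia].
Qed.

Lemma bmin_spec n P :
  bmin n P <= n /\ (bmin n P < n -> P (bmin n P) <> 0) /\ (forall j, j < bmin n P -> P j = 0).
Proof.
  induction n; unfold bmin in *; simpl.
  - repeat split; intros; lia.
  - set (a := reciter 0 _ n) in *. clearbody a. destruct IHn as [H1 [H2 H3]].
    unfold ltn. destruct (n - a) eqn:E; simpl.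
    + assert (Ha : a = n) by lia. rewrite Ha in H1, H2, H3. destruct (P n) eqn:Ep; simpl.
      * repeat split; try lia. intros j Hj. destruct (Nat.eq_dec j n); [subst; auto| apply H3; lia].
      * repeat split; try lia; intros; try lia; apply H3; lia.
    + repeat split; try lia; intros; try apply H2; try apply H3; lia.
Qed.

Lemma bmin_least n P i : i < n -> P i <> 0 -> bmin n P <= i /\ P (bmin n P) <> 0.
Proof.
  intros Hi Hp. destruct (bmin_spec n P) as [H1 [H2 H3]].
  assert (bmin n P <= i). { destruct (le_lt_dec (bmin n P) i); auto. exfalso; apply Hp, H3; auto. }
  split; auto. apply H2; lia.
Qed.

Local Open Scope nat_scope.


Definition T n := reciter 0 (fun m a => a + S m) n.
Lemma T_S n : T (S n) = T n + S n. Proof. reflexivity. Qed.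
Lemma T_ge n : n <= T n. Proof. induction n; rewrite ?T_S; simpl; lia. Qed.
Lemma T_mono a b : a <= b -> T a <= T b.
Proof. induction 1; auto. rewrite T_S; lia. Qed.

Definition pair a b := T (a + b) + b.
Definition unn z := bmin (S z) (fun n => ltn z (T (S n))).
Definition psnd z := z - T (unn z).
Definition pfst z := unn z - psnd z.

Lemma unn_pair a b : unn (pair a b) = a + b.
Proof.
  unfold unn. set (z := pair a b).
  assert (Hz : T (a+b) <= z < T (S (a + b))) by (unfold z, pair; rewrite T_S; lia).
  destruct (bmin_least (S z) (fun n => ltn z (T (S n))) (a+b)) as [H1 H2].
  - pose proof (T_ge (a+b)); unfold z, pair; lia.
  - apply ltn_nz; lia.
  - apply ltn_nz in H2. destruct (Nat.eq_dec (bmin (S z) (fun n => ltn z (T (S n)))) (a+b)); auto.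
    exfalso. assert (S (bmin (S z) (fun n => ltn z (T (S n)))) <= a + b) by lia.
    apply T_mono in H. lia.
Qed.

Lemma psnd_pair a b : psnd (pair a b) = b.
Proof. unfold psnd. rewrite unn_pair. unfold pair. lia. Qed.
Lemma pfst_pair a b : pfst (pair a b) = a.
Proof. unfold pfst. rewrite psnd_pair, unn_pair. lia. Qed.
Lemma pair_ge a b : a <= pair a b /\ b <= pair a b.
Proof. unfold pair. pose proof (T_ge (a+b)). lia. Qed.

Lemma pair_surj z : exists a b, pair a b = z.
Proof.
  induction z.
  - exists 0, 0; reflexivity.
  - destruct IHz as [a [b H]]. destruct a.
    + exists (S b), 0. unfold pair in *. replace (S b + 0) with (S b) by lia. rewrite T_S. rewrite Nat.add_0_l in H. lia.
    + exists a, (S b). unfold pair in *. replace (a + S b) with (S a + b) by lia. lia.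
Qed.

Lemma pair_inj a b c d : pair a b = pair c d -> a = c /\ b = d.
Proof. intros H. split; [rewrite <- (pfst_pair a b), H, pfst_pair|rewrite <- (psnd_pair a b), H, psnd_pair]; auto. Qed.

Lemma pair_fst_snd z : pair (pfst z) (psnd z) = z.
Proof. destruct (pair_surj z) as [a [b <-]]. rewrite pfst_pair, psnd_pair; auto. Qed.

Lemma repr_T : repr 1 (fun e => T (nth 0 e 0)). Proof. unfold T. prim2. Qed.
#[export] Hint Resolve repr_T : prdb.
Lemma repr_pair : repr 2 (fun e => pair (nth 0 e 0) (nth 1 e 0)). Proof. unfold pair. prim2. Qed.
#[export] Hint Resolve repr_pair : prdb.
Lemma repr_unn : repr 1 (fun e => unn (nth 0 e 0)). Proof. unfold unn. prim2. Qed.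
#[export] Hint Resolve repr_unn : prdb.
Lemma repr_psnd : repr 1 (fun e => psnd (nth 0 e 0)). Proof. unfold psnd. prim2. Qed.
#[export] Hint Resolve repr_psnd : prdb.
Lemma repr_pfst : repr 1 (fun e => pfst (nth 0 e 0)). Proof. unfold pfst. prim2. Qed.
#[export] Hint Resolve repr_pfst : prdb.

Fixpoint lcode (l : list nat) : nat :=
  match l with [] => 0 | a :: l' => S (pair a (lcode l')) end.
Definition lhead c := pfst (pred c).
Definition ltail c := ifz c 0 (psnd (pred c)).
Definition iterT r c := reciter c (fun _ a => ltail a) r.
Definition nthc r c := lhead (iterT r c).
Definition lenc c := bmin (S c) (fun r => notn (iterT r c)).

Lemma repr_lhead : repr 1 (fun e => lhead (nth 0 e 0)). Proof. unfold lhead. prim2. Qed.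
#[export] Hint Resolve repr_lhead : prdb.
Lemma repr_ltail : repr 1 (fun e => ltail (nth 0 e 0)). Proof. unfold ltail. prim2. Qed.
#[export] Hint Resolve repr_ltail : prdb.
Lemma repr_iterT : repr 2 (fun e => iterT (nth 0 e 0) (nth 1 e 0)). Proof. unfold iterT. prim2. Qed.
#[export] Hint Resolve repr_iterT : prdb.
Lemma repr_nthc : repr 2 (fun e => nthc (nth 0 e 0) (nth 1 e 0)). Proof. unfold nthc. prim2. Qed.
#[export] Hint Resolve repr_nthc : prdb.
Lemma repr_lenc : repr 1 (fun e => lenc (nth 0 e 0)). Proof. unfold lenc. prim2. Qed.
#[export] Hint Resolve repr_lenc : prdb.

Lemma lhead_cons a l : lhead (lcode (a :: l)) = a.
Proof. unfold lhead; simpl. apply pfst_pair. Qed.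
Lemma ltail_cons a l : ltail (lcode (a :: l)) = lcode l.
Proof. unfold ltail; simpl. apply psnd_pair. Qed.
Lemma lhead_nil : lhead 0 = 0. Proof. reflexivity. Qed.
Lemma ltail_nil : ltail 0 = 0. Proof. reflexivity. Qed.
Lemma lhead_code l : lhead (lcode l) = hd 0 l.
Proof. destruct l; [reflexivity|apply lhead_cons]. Qed.
Lemma ltail_code l : ltail (lcode l) = lcode (tl l).
Proof. destruct l; [reflexivity|apply ltail_cons]. Qed.

Lemma skipn_S_tl r (l : list nat) : skipn (S r) l = tl (skipn r l).
Proof. revert l; induction r; intros [|x l]; simpl; auto. rewrite <- IHr. destruct l; reflexivity. Qed.

Lemma iterT_code r l : iterT r (lcode l) = lcode (skipn r l).
Proof.
  revert l; induction r; intros l; [reflexivity|].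
  change (iterT (S r) (lcode l)) with (ltail (iterT r (lcode l))). rewrite IHr, ltail_code, skipn_S_tl. reflexivity.
Qed.

Lemma nthc_code r l : nthc r (lcode l) = nth r l 0.
Proof.
  unfold nthc. rewrite iterT_code, lhead_code.
  revert l; induction r; intros [|x l]; simpl; auto.
Qed.

Lemma lcode_ge l : length l <= lcode l.
Proof. induction l; simpl; auto. pose proof (pair_ge a (lcode l)); lia. Qed.

Lemma lcode_zero l : lcode l = 0 <-> l = [].
Proof. destruct l; simpl; split; congruence. Qed.

Lemma lenc_code l : lenc (lcode l) = length l.
Proof.
  unfold lenc. pose proof (lcode_ge l).
  destruct (bmin_least (S (lcode l)) (fun r => notn (iterT r (lcode l))) (length l)) as [H1 H2].
  - lia.
  - apply notn_nz. rewrite iterT_code, skipn_all; reflexivity.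
  - apply notn_nz in H2. rewrite iterT_code, lcode_zero in H2.
    assert (length (skipn (bmin (S (lcode l)) (fun r => notn (iterT r (lcode l)))) l) = 0) by (rewrite H2; auto).
    rewrite length_skipn in H0. lia.
Qed.

Lemma lcode_surj c : exists l, lcode l = c.
Proof.
  induction c as [c IH] using lt_wf_ind. destruct c.
  - exists []; auto.
  - destruct (pair_surj c) as [a [b Hab]]. destruct (IH b) as [l Hl].
    + pose proof (pair_ge a b); lia.
    + exists (a :: l); simpl; congruence.
Qed.

Lemma lcode_inj l1 l2 : lcode l1 = lcode l2 -> l1 = l2.
Proof.
  revert l2; induction l1; intros [|b l2]; simpl; try congruence.
  intros H; injection H; intros H'. apply pair_inj in H'. destruct H'. f_equal; auto.
Qed.

Local Open Scope nat_scope.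


Fixpoint encode (p : PR) : nat :=
  match p with
  | PRzero => pair 0 0
  | PRsucc => pair 1 0
  | PRproj n => pair 2 n
  | PRcomp f gs => pair 3 (pair (encode f) (lcode (map encode gs)))
  | PRrec f g => pair 4 (pair (encode f) (encode g))
  end.

Definition fact c i o := pair c (pair i o).
Definition fin x := pfst (psnd x).
Definition fout x := psnd (psnd x).
Definition occ t i X := bexn i (fun j => eqn (nthc j t) X).

Definition Jcomp t i x :=
  bexn i (fun j => andn (eqn (pfst (nthc j t)) (pfst (psnd (pfst x))))
     (andn (eqn (fout (nthc j t)) (fout x))
      (andn (eqn (lenc (fin (nthc j t))) (lenc (psnd (psnd (pfst x)))))
        (ball (lenc (psnd (psnd (pfst x))))
           (fun r => occ t i (fact (nthc r (psnd (psnd (pfst x)))) (fin x) (nthc r (fin (nthc j t))))))))).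

Definition Jrec t i x :=
 ifz (lhead (fin x)) (occ t i (fact (pfst (psnd (pfst x))) (ltail (fin x)) (fout x)))
   (bexn i (fun j => andn (andn (eqn (pfst (nthc j t)) (pfst x))
                                (eqn (fin (nthc j t)) (S (pair (pred (lhead (fin x))) (ltail (fin x))))))
        (occ t i (fact (psnd (psnd (pfst x)))
                       (S (pair (pred (lhead (fin x))) (S (pair (fout (nthc j t)) (ltail (fin x))))))
                       (fout x))))).

Definition Jx t i x :=
 ifz (pfst (pfst x)) (eqn (fout x) 0)
 (ifz (pfst (pfst x) - 1) (eqn (fout x) (S (lhead (fin x))))
 (ifz (pfst (pfst x) - 2) (eqn (fout x) (nthc (psnd (pfst x)) (fin x)))
 (ifz (pfst (pfst x) - 3) (Jcomp t i x)
 (ifz (pfst (pfst x) - 4) (Jrec t i x) 0)))).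

Definition Valid t := ball (lenc t) (fun i => Jx t i (nthc i t)).

Lemma repr_fact : repr 3 (fun e => fact (nth 0 e 0) (nth 1 e 0) (nth 2 e 0)). Proof. unfold fact. prim2. Qed.
#[export] Hint Resolve repr_fact : prdb.
Lemma repr_fin : repr 1 (fun e => fin (nth 0 e 0)). Proof. unfold fin. prim2. Qed.
#[export] Hint Resolve repr_fin : prdb.
Lemma repr_fout : repr 1 (fun e => fout (nth 0 e 0)). Proof. unfold fout. prim2. Qed.
#[export] Hint Resolve repr_fout : prdb.
Lemma repr_occ : repr 3 (fun e => occ (nth 0 e 0) (nth 1 e 0) (nth 2 e 0)). Proof. unfold occ. prim2. Qed.
#[export] Hint Resolve repr_occ : prdb.
Lemma repr_Jcomp : repr 3 (fun e => Jcomp (nth 0 e 0) (nth 1 e 0) (nth 2 e 0)). Proof. unfold Jcomp. prim2. Qed.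
#[export] Hint Resolve repr_Jcomp : prdb.
Lemma repr_Jrec : repr 3 (fun e => Jrec (nth 0 e 0) (nth 1 e 0) (nth 2 e 0)). Proof. unfold Jrec. prim2. Qed.
#[export] Hint Resolve repr_Jrec : prdb.
Lemma repr_Jx : repr 3 (fun e => Jx (nth 0 e 0) (nth 1 e 0) (nth 2 e 0)). Proof. unfold Jx. prim2. Qed.
#[export] Hint Resolve repr_Jx : prdb.
Lemma repr_Valid : repr 1 (fun e => Valid (nth 0 e 0)). Proof. unfold Valid. prim2. Qed.
#[export] Hint Resolve repr_Valid : prdb.

Local Open Scope nat_scope.


Lemma encode_tag p : pfst (encode p) = match p with PRzero => 0 | PRsucc => 1 | PRproj _ => 2 | PRcomp _ _ => 3 | PRrec _ _ => 4 end.
Proof. destruct p; simpl; apply pfst_pair. Qed.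

Lemma fact_c c i o : pfst (fact c i o) = c. Proof. apply pfst_pair. Qed.
Lemma fact_i c i o : fin (fact c i o) = i. Proof. unfold fin, fact. rewrite psnd_pair; apply pfst_pair. Qed.
Lemma fact_o c i o : fout (fact c i o) = o. Proof. unfold fout, fact. rewrite !psnd_pair; auto. Qed.

Lemma occ_nz t i X : occ t i X <> 0 <-> exists j, j < i /\ nthc j t = X.
Proof. unfold occ. rewrite bexn_nz. split; intros [j [H1 H2]]; exists j; split; auto; apply eqn_nz; auto. Qed.

Lemma encode_zero : encode PRzero = 0. Proof. reflexivity. Qed.

Theorem sound t : Valid t <> 0 -> forall i, i < lenc t -> forall p xs,
  pfst (nthc i t) = encode p -> fin (nthc i t) = lcode xs -> pr_eval p xs = fout (nthc i t).
Proof.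
  intros HV. unfold Valid in HV. rewrite ball_nz in HV.
  intros i. induction i as [i IH] using lt_wf_ind. intros Hi p xs Hc Hin.
  specialize (HV i Hi). set (x := nthc i t) in *. clearbody x.
  unfold Jx in HV. rewrite Hc, encode_tag in HV. destruct p as [| |n|f gs|f g]; simpl in HV.
  - apply eqn_nz in HV. simpl. auto.
  - apply eqn_nz in HV. rewrite HV, Hin, lhead_code. destruct xs; reflexivity.
  - apply eqn_nz in HV. rewrite HV, Hin, nthc_code, psnd_pair. reflexivity.
  - unfold Jcomp in HV. rewrite Hc in HV. simpl encode in HV. rewrite !psnd_pair, pfst_pair in HV.
    apply bexn_nz in HV. destruct HV as [j [Hj HV]].
    rewrite !andn_nz, !eqn_nz, ball_nz in HV. destruct HV as [H1 [H2 [H3 H4]]].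
    rewrite lenc_code, length_map in H3, H4.
    destruct (lcode_surj (fin (nthc j t))) as [ys Hys].
    rewrite <- Hys, lenc_code in H3.
    assert (Hmap : map (fun g => pr_eval g xs) gs = ys).
    { apply nth_ext with (d := 0) (d' := 0). rewrite length_map; auto.
      intros r Hr. rewrite length_map in Hr. specialize (H4 r Hr).
      apply occ_nz in H4. destruct H4 as [j2 [Hj2 H4]].
      rewrite nthc_code in H4.
      rewrite (nth_indep _ _ (pr_eval PRzero xs)) by (rewrite length_map; auto).
      rewrite (map_nth (fun g => pr_eval g xs) gs PRzero r).
      rewrite <- encode_zero, map_nth, Hin in H4.
      rewrite (IH j2 ltac:(lia) ltac:(lia) (nth r gs PRzero) xs).
      - rewrite H4, fact_o, <- Hys, nthc_code. reflexivity.
      - rewrite H4, fact_c. reflexivity.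
      - rewrite H4, fact_i. reflexivity. }
    rewrite pr_eval_comp, Hmap, <- H2. apply (IH j); auto; lia.
  - unfold Jrec in HV. rewrite Hc in HV. simpl encode in HV. rewrite !psnd_pair, !pfst_pair in HV.
    rewrite Hin, lhead_code, ltail_code in HV. rewrite pr_eval_rec.
    destruct xs as [|a ys].
    + simpl in *. apply occ_nz in HV. destruct HV as [j [Hj HV]].
      rewrite (IH j ltac:(lia) ltac:(lia) f []).
      * rewrite HV, fact_o; auto.
      * rewrite HV, fact_c; auto.
      * rewrite HV, fact_i; auto.
    + simpl hd in *; simpl tl in *. destruct a as [|m]; simpl in HV.
      * apply occ_nz in HV. destruct HV as [j [Hj HV]]. simpl.
        rewrite (IH j ltac:(lia) ltac:(lia) f ys).
        -- rewrite HV, fact_o; auto.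
        -- rewrite HV, fact_c; auto.
        -- rewrite HV, fact_i; auto.
      * apply bexn_nz in HV. destruct HV as [j [Hj HV]].
        rewrite !andn_nz, !eqn_nz in HV. destruct HV as [[H1 H2] H3].
        apply occ_nz in H3. destruct H3 as [j2 [Hj2 H3]].
        assert (Hr : pr_eval (PRrec f g) (m :: ys) = fout (nthc j t)).
        { apply IH; auto; try lia; rewrite ?H1, ?Hc; auto. }
        rewrite pr_eval_rec in Hr. simpl in Hr. simpl.
        rewrite Hr. transitivity (fout (nthc j2 t)); [|rewrite H3, fact_o; auto].
        apply IH; try lia.
        -- rewrite H3, fact_c; auto.
        -- rewrite H3, fact_i; auto.
Qed.

Local Open Scope nat_scope.


Section Mono.
Variables (t t' i i' : nat).
Hypothesis Hemb : forall j', j' < i' -> exists j, j < i /\ nthc j t = nthc j' t'.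

Lemma occ_mono X : occ t' i' X <> 0 -> occ t i X <> 0.
Proof.
  rewrite !occ_nz. intros [j' [Hj' H]]. destruct (Hemb j' Hj') as [j [Hj E]].
  exists j; split; auto; congruence.
Qed.

Lemma Jcomp_mono x : Jcomp t' i' x <> 0 -> Jcomp t i x <> 0.
Proof.
  unfold Jcomp. rewrite !bexn_nz. intros [j' [Hj' Hb]].
  destruct (Hemb j' Hj') as [j [Hj E]]. exists j; split; auto. rewrite E.
  revert Hb. rewrite !andn_nz, !ball_nz. intros [A [B [C D]]]. repeat split; auto.
  intros r Hr. apply occ_mono, D; auto.
Qed.

Lemma Jrec_mono x : Jrec t' i' x <> 0 -> Jrec t i x <> 0.
Proof.
  unfold Jrec. destruct (lhead (fin x)); simpl.
  - apply occ_mono.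
  - rewrite !bexn_nz. intros [j' [Hj' Hb]].
    destruct (Hemb j' Hj') as [j [Hj E]]. exists j; split; auto. rewrite E.
    revert Hb. rewrite !andn_nz. intros [A B]. split; auto. apply occ_mono; auto.
Qed.

Lemma Jx_mono x : Jx t' i' x <> 0 -> Jx t i x <> 0.
Proof.
  unfold Jx. destruct (pfst (pfst x)) as [|[|[|[|[|k]]]]]; simpl; auto.
  - apply Jcomp_mono.
  - apply Jrec_mono.
Qed.
End Mono.

Lemma Valid_iff l : Valid (lcode l) <> 0 <-> forall i, i < length l -> Jx (lcode l) i (nth i l 0) <> 0.
Proof.
  unfold Valid. rewrite ball_nz, lenc_code. split; intros H i Hi; specialize (H i Hi); rewrite nthc_code in *; auto.
Qed.

Lemma nthc_app_l l1 l2 j : j < length l1 -> nthc j (lcode (l1 ++ l2)) = nthc j (lcode l1).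
Proof. intros; rewrite !nthc_code, app_nth1; auto. Qed.
Lemma nthc_app_r l1 l2 j : nthc (length l1 + j) (lcode (l1 ++ l2)) = nthc j (lcode l2).
Proof. rewrite !nthc_code, app_nth2 by lia. f_equal; lia. Qed.

Lemma Valid_app l1 l2 : Valid (lcode l1) <> 0 -> Valid (lcode l2) <> 0 -> Valid (lcode (l1 ++ l2)) <> 0.
Proof.
  rewrite !Valid_iff. intros H1 H2 i Hi. rewrite length_app in Hi.
  destruct (lt_dec i (length l1)).
  - rewrite app_nth1 by auto. apply (Jx_mono _ (lcode l1) _ i); auto.
    intros j' Hj'. exists j'; split; auto. apply nthc_app_l; lia.
  - replace i with (length l1 + (i - length l1)) by lia.
    rewrite app_nth2_plus. apply (Jx_mono _ (lcode l2) _ (i - length l1)); [|apply H2; lia].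
    intros j' Hj'. exists (length l1 + j'); split; [lia|]. apply nthc_app_r.
Qed.

Lemma Valid_snoc l x : Valid (lcode l) <> 0 -> Jx (lcode (l ++ [x])) (length l) x <> 0 ->
  Valid (lcode (l ++ [x])) <> 0.
Proof.
  rewrite !Valid_iff. intros H1 H2 i Hi. rewrite length_app in Hi; simpl in Hi.
  destruct (lt_dec i (length l)).
  - rewrite app_nth1 by auto. apply (Jx_mono _ (lcode l) _ i); auto.
    intros j' Hj'. exists j'; split; auto. apply nthc_app_l; lia.
  - replace i with (length l) by lia. rewrite nth_middle. auto.
Qed.

Lemma occ_In l r X : In X l -> occ (lcode (l ++ r)) (length l) X <> 0.
Proof.
  intros H. apply occ_nz. apply In_nth with (d := 0) in H. destruct H as [j [Hj H]].
  exists j; split; auto. rewrite nthc_app_l, nthc_code; auto.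
Qed.

Lemma In_nthc l r X : In X l -> exists j, j < length l /\ nthc j (lcode (l ++ r)) = X.
Proof.
  intros H. apply In_nth with (d := 0) in H. destruct H as [j [Hj H]].
  exists j; split; auto. rewrite nthc_app_l, nthc_code; auto.
Qed.

Fixpoint PR_ind' (P : PR -> Prop) (H0 : P PRzero) (H1 : P PRsucc) (H2 : forall n, P (PRproj n))
  (H3 : forall f gs, P f -> Forall P gs -> P (PRcomp f gs))
  (H4 : forall f g, P f -> P g -> P (PRrec f g)) (p : PR) {struct p} : P p :=
  match p with
  | PRzero => H0 | PRsucc => H1 | PRproj n => H2 n
  | PRcomp f gs => H3 f gs (PR_ind' P H0 H1 H2 H3 H4 f)
      ((fix F (l : list PR) : Forall P l := match l with
        | [] => Forall_nil P
        | g :: l' => Forall_cons g (PR_ind' P H0 H1 H2 H3 H4 g) (F l') end) gs)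
  | PRrec f g => H4 f g (PR_ind' P H0 H1 H2 H3 H4 f) (PR_ind' P H0 H1 H2 H3 H4 g)
  end.

Definition Cpl p := forall xs, exists l, Valid (lcode l) <> 0 /\ In (fact (encode p) (lcode xs) (pr_eval p xs)) l.

Lemma Jx_tag x t i k : pfst (pfst x) = k -> Jx t i x =
 match k with 0 => eqn (fout x) 0 | 1 => eqn (fout x) (S (lhead (fin x)))
 | 2 => eqn (fout x) (nthc (psnd (pfst x)) (fin x)) | 3 => Jcomp t i x | 4 => Jrec t i x | _ => 0 end.
Proof. intros H; unfold Jx; rewrite H. destruct k as [|[|[|[|[|k]]]]]; reflexivity. Qed.

Lemma single_ok x : Jx (lcode [x]) 0 x <> 0 -> Valid (lcode [x]) <> 0.
Proof. intros H. apply (Valid_snoc []); auto. Qed.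

Theorem complete p : Cpl p.
Proof.
  induction p as [| |n|f gs IHf IHgs|f g IHf IHg] using PR_ind'; intros xs.
  - exists [fact (encode PRzero) (lcode xs) 0]. split; [|left; auto].
    apply single_ok. rewrite (Jx_tag _ _ _ 0) by (rewrite fact_c; apply encode_tag).
    apply eqn_nz. apply fact_o.
  - exists [fact (encode PRsucc) (lcode xs) (pr_eval PRsucc xs)]. split; [|left; auto].
    apply single_ok. rewrite (Jx_tag _ _ _ 1) by (rewrite fact_c; apply encode_tag).
    apply eqn_nz. rewrite fact_o, fact_i, lhead_code. destruct xs; reflexivity.
  - exists [fact (encode (PRproj n)) (lcode xs) (pr_eval (PRproj n) xs)]. split; [|left; auto].
    apply single_ok. rewrite (Jx_tag _ _ _ 2) by (rewrite fact_c; apply encode_tag).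
    apply eqn_nz. rewrite fact_o, fact_i, fact_c, nthc_code. simpl. rewrite psnd_pair. reflexivity.
  -
    assert (HL : exists L, Valid (lcode L) <> 0 /\
               forall g, In g gs -> In (fact (encode g) (lcode xs) (pr_eval g xs)) L).
    { clear IHf. induction IHgs as [|g gs' Hg _ [L [HL1 HL2]]].
      - exists []; split; [apply Valid_iff; simpl; intros; lia|intros g []].
      - destruct (Hg xs) as [L1 [H1 H2]]. exists (L1 ++ L); split; [apply Valid_app; auto|].
        intros g' [<-|Hin]; apply in_or_app; auto. }
    destruct HL as [L [HL1 HL2]].
    set (ys := map (fun g => pr_eval g xs) gs).
    destruct (IHf ys) as [Lf [Hf1 Hf2]].
    set (X := fact (encode (PRcomp f gs)) (lcode xs) (pr_eval (PRcomp f gs) xs)).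
    exists ((L ++ Lf) ++ [X]). split; [|apply in_or_app; right; left; auto].
    apply Valid_snoc; [apply Valid_app; auto|].
    rewrite (Jx_tag _ _ _ 3) by (unfold X; rewrite fact_c; apply encode_tag).
    unfold Jcomp. apply bexn_nz.
    destruct (In_nthc (L ++ Lf) [X] (fact (encode f) (lcode ys) (pr_eval f ys))) as [j [Hj Ej]].
    { apply in_or_app; auto. }
    exists j; split; auto. rewrite Ej. unfold X. rewrite !fact_c, !fact_o, !fact_i.
    simpl encode. rewrite !psnd_pair, !pfst_pair.
    rewrite !andn_nz, !eqn_nz, ball_nz. rewrite !lenc_code. unfold ys; rewrite !length_map.
    rewrite pr_eval_comp. repeat split; auto.
    intros r Hr. apply occ_In. apply in_or_app. left.
    rewrite !nthc_code. rewrite <- encode_zero, map_nth.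
    rewrite (nth_indep _ _ (pr_eval PRzero xs)) by (rewrite length_map; auto).
    rewrite (map_nth (fun g => pr_eval g xs) gs PRzero r).
    apply HL2. apply nth_In; auto.
  -
    assert (Hn : forall n ys, exists l, Valid (lcode l) <> 0 /\
       In (fact (encode (PRrec f g)) (lcode (n :: ys)) (pr_eval (PRrec f g) (n :: ys))) l).
    { intros n ys. induction n as [|n IHn].
      - destruct (IHf ys) as [Lf [H1 H2]].
        set (X := fact (encode (PRrec f g)) (lcode (0 :: ys)) (pr_eval (PRrec f g) (0 :: ys))).
        exists (Lf ++ [X]). split; [|apply in_or_app; right; left; auto].
        apply Valid_snoc; auto.
        rewrite (Jx_tag _ _ _ 4) by (unfold X; rewrite fact_c; apply encode_tag).
        unfold Jrec, X. rewrite fact_i, fact_o, fact_c, lhead_code, ltail_code. simpl.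
        rewrite psnd_pair, pfst_pair. apply occ_In. exact H2.
      - destruct IHn as [L1 [H11 H12]].
        set (v := pr_eval (PRrec f g) (n :: ys)) in *.
        destruct (IHg (n :: v :: ys)) as [Lg [Hg1 Hg2]].
        set (X := fact (encode (PRrec f g)) (lcode (S n :: ys)) (pr_eval (PRrec f g) (S n :: ys))).
        exists ((L1 ++ Lg) ++ [X]). split; [|apply in_or_app; right; left; auto].
        apply Valid_snoc; [apply Valid_app; auto|].
        rewrite (Jx_tag _ _ _ 4) by (unfold X; rewrite fact_c; apply encode_tag).
        assert (E1 : fin X = lcode (S n :: ys)) by (unfold X; apply fact_i).
        assert (E2 : pfst X = encode (PRrec f g)) by (unfold X; apply fact_c).
        assert (E3 : fout X = pr_eval g (n :: v :: ys)).
        { unfold X; rewrite fact_o; unfold v; rewrite !pr_eval_rec; reflexivity. }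
        clearbody X. unfold Jrec. rewrite E1, E2, E3, lhead_code, ltail_code.
        cbv [ifz hd tl pred]. simpl encode. rewrite !psnd_pair. apply bexn_nz.
        destruct (In_nthc (L1 ++ Lg) [X] (fact (encode (PRrec f g)) (lcode (n :: ys)) v)) as [j [Hj Ej]].
        { apply in_or_app; auto. }
        exists j; split; auto. rewrite Ej, fact_c, fact_i, fact_o.
        rewrite !andn_nz, !eqn_nz. repeat split; auto.
        apply occ_In. apply in_or_app; right. exact Hg2. }
    destruct xs as [|n ys]; [|apply Hn].
    destruct (IHf []) as [Lf [H1 H2]].
    set (X := fact (encode (PRrec f g)) (lcode []) (pr_eval (PRrec f g) [])).
    exists (Lf ++ [X]). split; [|apply in_or_app; right; left; auto].
    apply Valid_snoc; auto.
    rewrite (Jx_tag _ _ _ 4) by (unfold X; rewrite fact_c; apply encode_tag).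
    unfold Jrec, X. rewrite fact_i, fact_o, fact_c. simpl lcode. rewrite lhead_nil, ltail_nil. simpl.
    rewrite psnd_pair, pfst_pair. apply occ_In. exact H2.
Qed.

Local Open Scope nat_scope.


Definition h e k := 2 ^ (e + 1) * (2 * k + 1) - 1.

Lemma pow_ge e : e + 1 <= 2 ^ (e + 1).
Proof. induction e; simpl in *; lia. Qed.

Lemma h_ge e k : e <= h e k /\ k <= h e k.
Proof. unfold h. pose proof (pow_ge e). nia. Qed.

Definition Q (e j : nat) : Prop :=
  exists m t, Valid t <> 0 /\ occ t (lenc t) (fact e (lcode [h e j; m]) 0) <> 0.

Definition Good (Qf : nat -> nat -> Prop) (x : nat) : Prop :=
  forall e k, x = h e k -> forall j, j <= k -> Qf e j.

Definition Aset : natset := fun x => if excluded_middle_informative (Good Q x) then true else false.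

Definition lcode2 a b := S (pair a (S (pair b 0))).

Definition MatF x M :=
  ball (S x) (fun e => ball (S x) (fun k => orn (notn (eqn x (h e k)))
     (ball (S k) (fun j => bexn (S M) (fun m => bexn (S M) (fun t =>
        andn (Valid t) (occ t (lenc t) (fact e (lcode2 (h e j) m) 0)))))))).

Lemma repr_h : repr 2 (fun e => h (nth 0 e 0) (nth 1 e 0)). Proof. unfold h. prim2. Qed.
#[export] Hint Resolve repr_h : prdb.
Lemma repr_lcode2 : repr 2 (fun e => lcode2 (nth 0 e 0) (nth 1 e 0)). Proof. unfold lcode2. prim2. Qed.
#[export] Hint Resolve repr_lcode2 : prdb.
Lemma repr_MatF : repr 2 (fun e => MatF (nth 0 e 0) (nth 1 e 0)). Proof. unfold MatF. prim2. Qed.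

Lemma eqn_z a b : eqn a b = 0 <-> a <> b.
Proof. unfold eqn, notn. destruct (a - b + (b - a)) eqn:E; simpl; split; intros; lia. Qed.

Lemma bounded_choice (P : nat -> nat -> Prop) n :
  (forall i, i < n -> exists M, forall M', M <= M' -> P i M') ->
  exists M, forall i, i < n -> forall M', M <= M' -> P i M'.
Proof.
  induction n; intros H.
  - exists 0; intros; lia.
  - destruct IHn as [M1 H1]. { intros i Hi; apply H; lia. }
    destruct (H n ltac:(lia)) as [M2 H2]. exists (max M1 M2).
    intros i Hi M' HM'. destruct (Nat.eq_dec i n); [subst; apply H2; lia|apply H1; lia].
Qed.

Lemma Aset_ce_iff x : Aset x = true <-> exists M, MatF x M <> 0.
Proof.
  unfold Aset. destruct (excluded_middle_informative (Good Q x)) as [G|G]; split; intros H; try congruence.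
  - assert (HM : exists M, forall e, e < S x -> forall M', M <= M' -> forall k, k < S k -> True) by (exists 0; auto).
    clear HM.
    destruct (bounded_choice (fun e M => forall k, k < S x -> x = h e k -> forall j, j < S k ->
         exists m t, m < S M /\ t < S M /\ Valid t <> 0 /\ occ t (lenc t) (fact e (lcode2 (h e j) m) 0) <> 0) (S x))
      as [M HM].
    { intros e He.
      destruct (bounded_choice (fun k M => x = h e k -> forall j, j < S k ->
         exists m t, m < S M /\ t < S M /\ Valid t <> 0 /\ occ t (lenc t) (fact e (lcode2 (h e j) m) 0) <> 0) (S x))
        as [M HM].
      { intros k Hk. destruct (Nat.eq_dec x (h e k)) as [Ex|Ex]; [|exists 0; intros; congruence].
        destruct (bounded_choice (fun j M => exists m t, m < S M /\ t < S M /\ Valid t <> 0 /\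
                  occ t (lenc t) (fact e (lcode2 (h e j) m) 0) <> 0) (S k)) as [M HM].
        { intros j Hj. destruct (G e k Ex j ltac:(lia)) as [m [t [H1 H2]]].
          exists (max m t). intros M' HM'. exists m, t. repeat split; auto; lia. }
        exists M. intros M' HM' _ j Hj. apply HM; auto. }
      exists M. intros M' HM' k Hk. apply HM; auto. }
    exists M. unfold MatF. apply ball_nz. intros e He. apply ball_nz. intros k Hk.
    apply orn_nz. destruct (Nat.eq_dec x (h e k)) as [Ex|Ex]; [right|left; rewrite notn_nz, eqn_z; auto].
    apply ball_nz. intros j Hj. destruct (HM e He M (Nat.le_refl _) k Hk Ex j Hj) as [m [t [H1 [H2 [H3 H4]]]]].
    apply bexn_nz. exists m; split; auto. apply bexn_nz. exists t; split; auto. apply andn_nz; auto.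
  - exfalso. apply G. destruct H as [M HM]. intros e k Ex j Hj.
    destruct (h_ge e k) as [He Hk].
    unfold MatF in HM. rewrite ball_nz in HM. specialize (HM e ltac:(lia)). rewrite ball_nz in HM.
    specialize (HM k ltac:(lia)). rewrite orn_nz, notn_nz, eqn_z in HM.
    destruct HM as [HM|HM]; [congruence|]. rewrite ball_nz in HM. specialize (HM j ltac:(lia)).
    rewrite bexn_nz in HM. destruct HM as [m [_ HM]]. rewrite bexn_nz in HM. destruct HM as [t [_ HM]].
    rewrite andn_nz in HM. exists m, t. exact HM.
Qed.

Lemma Aset_ce : ce Aset.
Proof.
  destruct repr_MatF as [p Hp]. exists p. intros n. rewrite Aset_ce_iff. split.
  - intros [M HM]. exists M. rewrite Hp; auto.
  - intros [M HM]. exists M. rewrite Hp in HM; auto.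
Qed.

Lemma Q_iff p j : Q (encode p) j <-> exists m, pr_eval p [h (encode p) j; m] = 0.
Proof.
  split.
  - intros [m [t [HV Ho]]]. exists m. apply occ_nz in Ho. destruct Ho as [i [Hi Ho]].
    rewrite (sound t HV i Hi p [h (encode p) j; m]).
    + rewrite Ho, fact_o; auto.
    + rewrite Ho, fact_c; auto.
    + rewrite Ho, fact_i; auto.
  - intros [m Hm]. destruct (complete p [h (encode p) j; m]) as [l [HV Hin]].
    exists m, (lcode l). split; auto. rewrite lenc_code. apply occ_nz.
    apply In_nth with (d := 0) in Hin. destruct Hin as [i [Hi E]]. exists i; split; auto.
    rewrite nthc_code, E, Hm. reflexivity.
Qed.

Local Open Scope nat_scope.


Lemma count_S X n : count_below X (S n) = count_below X n + (if X n then 1 else 0).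
Proof. reflexivity. Qed.

Lemma count_le X n : count_below X n <= n.
Proof. induction n; rewrite ?count_S; [simpl; lia|destruct (X n); lia]. Qed.

Lemma count_mono X Y n : (forall x, X x = true -> Y x = true) -> count_below X n <= count_below Y n.
Proof. intros H; induction n; rewrite ?count_S; [simpl; lia|].
  destruct (X n) eqn:E; [rewrite (H n E)|destruct (Y n)]; lia. Qed.

Lemma count_add X P : (forall x, X (x + P) = X x) -> forall n, count_below X (n + P) = count_below X n + count_below X P.
Proof. intros H n; induction n; [reflexivity|]. simpl Nat.add. rewrite !count_S, IHn, H. lia. Qed.

Lemma count_per X P : (forall x, X (x + P) = X x) -> forall q r, count_below X (q * P + r) = q * count_below X P + count_below X r.
Proof.
  intros H q r; induction q; [reflexivity|].
  replace (S q * P + r) with ((q * P + r) + P) by lia. rewrite count_add, IHq by auto. lia.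
Qed.

Lemma periodic_bound X P : 0 < P -> (forall x, X (x + P) = X x) -> forall n,
  count_below X n * P <= n * count_below X P + P * P /\ n * count_below X P <= count_below X n * P + P * P.
Proof.
  intros HP Hper n. pose proof (Nat.div_mod n P ltac:(lia)) as Hn.
  pose proof (Nat.mod_upper_bound n P ltac:(lia)) as Hr.
  set (q := n / P) in *. set (r := n mod P) in *. clearbody q r. subst n.
  rewrite Nat.mul_comm with (n := P), count_per by auto.
  pose proof (count_le X r). pose proof (count_le X P).
  set (c := count_below X P) in *. set (cr := count_below X r) in *. nia.
Qed.

Lemma count_cover Y Z1 Z2 K : (forall x, K <= x -> Y x = true -> Z1 x = true \/ Z2 x = true) ->
  forall n, count_below Y n <= count_below Z1 n + count_below Z2 n + K.
Proof.
  intros H n. cut (count_below Y n <= count_below Z1 n + count_below Z2 n + min n K). { lia. }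
  induction n; [simpl; lia|]. rewrite !count_S.
  destruct (le_lt_dec K n).
  - destruct (Y n) eqn:E; [|destruct (Z1 n), (Z2 n); lia].
    destruct (H n l E) as [E1|E2]; [rewrite E1|rewrite E2]; destruct (Z1 n), (Z2 n); lia.
  - destruct (Y n), (Z1 n), (Z2 n); lia.
Qed.

Lemma count_one X a n : (forall x, x < n -> X x = true -> x = a) -> count_below X n <= 1.
Proof.
  intros H. induction n; [simpl; lia|]. rewrite count_S.
  destruct (X n) eqn:E.
  - assert (n = a) by (apply H; auto). subst a.
    assert (count_below X n = 0).
    { clear IHn. assert (forall m, m <= n -> count_below X m = 0); [|auto].
      induction m; intros Hm; [reflexivity|]. rewrite count_S, IHm by lia.
      destruct (X m) eqn:E'; auto. apply H in E'; lia. }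
    lia.
  - assert (count_below X n <= 1) by (apply IHn; intros x Hx; apply H; lia). lia.
Qed.

Definition hb e x := Nat.eqb ((x + 1) mod 2 ^ (e + 2)) (2 ^ (e + 1)).
Definition dN N x := Nat.eqb ((x + 1) mod 2 ^ (N + 1)) 0.

Lemma pow_pos n : 0 < 2 ^ n. Proof. induction n; simpl; lia. Qed.
Lemma pow_e2 e : 2 ^ (e + 2) = 2 * 2 ^ (e + 1).
Proof. replace (e + 2) with (S (e + 1)) by lia. reflexivity. Qed.

Lemma hb_spec e x : hb e x = true <-> exists k, x = h e k.
Proof.
  unfold hb, h. rewrite Nat.eqb_eq, pow_e2. pose proof (pow_pos (e + 1)).
  set (P := 2 ^ (e + 1)) in *. clearbody P. split.
  - intros Hm. pose proof (Nat.div_mod (x + 1) (2 * P) ltac:(lia)). rewrite Hm in H0.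
    exists ((x + 1) / (2 * P)). nia.
  - intros [k Hk]. symmetry. apply Nat.mod_unique with k; nia.
Qed.

Lemma h_mono e k k' : k < k' -> h e k < h e k'.
Proof. unfold h. pose proof (pow_pos (e + 1)). nia. Qed.

Lemma h_le e k k' : h e k <= h e k' -> k <= k'.
Proof. intros H. destruct (le_lt_dec k k'); auto. apply (h_mono e) in l. lia. Qed.

Lemma hb_per e m x : hb e (x + m * 2 ^ (e + 2)) = hb e x.
Proof. unfold hb. replace (x + m * 2 ^ (e + 2) + 1) with (x + 1 + m * 2 ^ (e + 2)) by lia.
  rewrite Nat.Div0.mod_add. reflexivity. Qed.

Lemma dN_per N x : dN N (x + 2 ^ (N + 1)) = dN N x.
Proof. unfold dN. replace (x + 2 ^ (N + 1) + 1) with (x + 1 + 1 * 2 ^ (N + 1)) by lia.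
  rewrite Nat.Div0.mod_add. reflexivity. Qed.

Lemma dN_count N : count_below (dN N) (2 ^ (N + 1)) <= 1.
Proof.
  apply count_one with (a := 2 ^ (N + 1) - 1). intros x Hx E. unfold dN in E.
  apply Nat.eqb_eq in E. destruct (Nat.eq_dec (x + 1) (2 ^ (N + 1))); [lia|].
  rewrite Nat.mod_small in E by lia. lia.
Qed.

Lemma dN_h N e k : N <= e -> dN N (h e k) = true.
Proof.
  intros He. unfold dN, h. apply Nat.eqb_eq. pose proof (pow_pos (e + 1)).
  replace (2 ^ (e + 1) * (2 * k + 1) - 1 + 1) with (2 ^ (e + 1) * (2 * k + 1)) by lia.
  replace (e + 1) with ((e - N) + (N + 1)) by lia. rewrite Nat.pow_add_r.
  replace (2 ^ (e - N) * 2 ^ (N + 1) * (2 * k + 1)) with ((2 ^ (e - N) * (2 * k + 1)) * 2 ^ (N + 1)) by ring.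
  apply Nat.Div0.mod_mul.
Qed.

Lemma existsb_seq_ext f g N : (forall e, e < N -> f e = g e) -> existsb f (seq 0 N) = existsb g (seq 0 N).
Proof.
  intros H. destruct (existsb f (seq 0 N)) eqn:E1, (existsb g (seq 0 N)) eqn:E2; auto.
  - apply existsb_exists in E1. destruct E1 as [e [Hin He]]. apply in_seq in Hin.
    rewrite H in He by lia. assert (existsb g (seq 0 N) = true) by (apply existsb_exists; exists e; split; auto; apply in_seq; lia). congruence.
  - apply existsb_exists in E2. destruct E2 as [e [Hin He]]. apply in_seq in Hin.
    rewrite <- H in He by lia. assert (existsb f (seq 0 N) = true) by (apply existsb_exists; exists e; split; auto; apply in_seq; lia). congruence.
Qed.

Theorem approx (Qf : nat -> nat -> Prop) (X : natset) (HX : forall x, X x = true <-> Good Qf x) N :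
  exists c C, forall n, count_below X n * 2 ^ (N + 1) <= n * c + n + C /\
                        n * c <= count_below X n * 2 ^ (N + 1) + n + C.
Proof.
  set (inE := fun e => if excluded_middle_informative (exists j, ~ Qf e j) then true else false).
  destruct (bounded_choice (fun e K => inE e = true -> exists j, ~ Qf e j /\ h e j <= K) N) as [K HK].
  { intros e He. destruct (excluded_middle_informative (exists j, ~ Qf e j)) as [[j Hj]|Hn].
    - exists (h e j). intros K HK _. exists j; split; auto.
    - exists 0. intros K _ E. unfold inE in E. destruct (excluded_middle_informative _); [contradiction|discriminate]. }
  set (P := 2 ^ (N + 1)).
  set (A' := fun x => negb (existsb (fun e => andb (inE e) (hb e x)) (seq 0 N))).
  assert (HPer : forall x, A' (x + P) = A' x).
  { intros x. unfold A'. f_equal. apply existsb_seq_ext. intros e He. f_equal.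
    unfold P. replace (N + 1) with ((N - 1 - e) + (e + 2)) by lia. rewrite Nat.pow_add_r. apply hb_per. }
  assert (H1 : forall x, K <= x -> X x = true -> A' x = true \/ (fun _ => false) x = true).
  { intros x Hx HXx. left. unfold A'. apply negb_true_iff. apply not_true_iff_false. intros E.
    apply existsb_exists in E. destruct E as [e [Hin E]]. apply in_seq in Hin.
    apply andb_true_iff in E. destruct E as [E1 E2]. apply hb_spec in E2. destruct E2 as [k Hk].
    destruct (HK e ltac:(lia) K (Nat.le_refl _) E1) as [j [Hj HjK]].
    apply HX in HXx. apply Hj. apply (HXx e k Hk j). apply (h_le e). lia. }
  assert (H2 : forall x, 0 <= x -> A' x = true -> X x = true \/ dN N x = true).
  { intros x _ HA. destruct (X x) eqn:E; [left; auto|right].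
    assert (~ Good Qf x) by (rewrite <- HX; congruence).
    unfold Good in H. apply not_all_ex_not in H. destruct H as [e H].
    apply not_all_ex_not in H. destruct H as [k H].
    apply imply_to_and in H. destruct H as [Hk H]. apply not_all_ex_not in H. destruct H as [j H].
    apply imply_to_and in H. destruct H as [Hj H].
    destruct (le_lt_dec N e) as [HNe|HNe]; [rewrite Hk; apply dN_h; auto|].
    exfalso. unfold A' in HA. apply negb_true_iff in HA. apply not_true_iff_false in HA. apply HA.
    apply existsb_exists. exists e. split; [apply in_seq; lia|]. apply andb_true_iff. split.
    - unfold inE. destruct (excluded_middle_informative _) as [_|Hn]; auto. exfalso; apply Hn; exists j; auto.
    - apply hb_spec. exists k; auto. }
  pose proof (count_cover _ _ _ _ H1) as C1.
  pose proof (count_cover _ _ _ _ H2) as C2.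
  assert (Z : forall n, count_below (fun _ => false) n = 0) by (induction n as [|n IH]; [reflexivity|rewrite count_S, IH; reflexivity]).
  assert (HP : 0 < P) by apply pow_pos.
  pose proof (periodic_bound A' P HP HPer) as PA.
  pose proof (periodic_bound (dN N) P HP (dN_per N)) as PD.
  pose proof (dN_count N) as DC. fold P in DC.
  exists (count_below A' P), (2 * P * P + K * P). intros n.
  specialize (C1 n). specialize (C2 n). rewrite Z in C1. specialize (PA n). specialize (PD n).
  fold P.
  set (a := count_below X n) in *. set (b := count_below A' n) in *. set (d := count_below (dN N) n) in *.
  set (c := count_below A' P) in *. set (cd := count_below (dN N) P) in *.
  clearbody a b d c cd P. nia.
Qed.

Open Scope R_scope.

Lemma real_bound (a n c P C : nat) : (1 <= n)%nat -> (1 <= P)%nat ->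
  (a * P <= n * c + n + C)%nat -> (n * c <= a * P + n + C)%nat ->
  Rabs (INR a / INR n - INR c / INR P) <= 1 / INR P + INR C / INR n.
Proof.
  intros Hn HP H1 H2. apply le_INR in H1, H2. rewrite ?plus_INR, ?mult_INR in H1, H2.
  apply le_INR in Hn, HP. simpl in Hn, HP.
  set (A := INR a) in *. set (N := INR n) in *. set (Cc := INR c) in *. set (Pp := INR P) in *.
  set (D := INR C) in *. assert (0 <= D) by apply pos_INR.
  apply Rabs_le. split.
  - apply Rmult_le_reg_r with (N * Pp); [nra|].
    replace ((- (1 / Pp + D / N)) * (N * Pp)) with (- (N + D * Pp)) by (field; lra).
    replace ((A / N - Cc / Pp) * (N * Pp)) with (A * Pp - N * Cc) by (field; lra). nra.
  - apply Rmult_le_reg_r with (N * Pp); [nra|].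
    replace ((1 / Pp + D / N) * (N * Pp)) with (N + D * Pp) by (field; lra).
    replace ((A / N - Cc / Pp) * (N * Pp)) with (A * Pp - N * Cc) by (field; lra). nra.
Qed.

Theorem density_from_approx (X : natset) :
  (forall N, exists c C, forall n, (count_below X n * 2 ^ (N + 1) <= n * c + n + C /\
                        n * c <= count_below X n * 2 ^ (N + 1) + n + C)%nat) -> has_density X.
Proof.
  intros HA. unfold has_density. apply ex_lim_seq_cauchy_corr. intros eps.
  destruct (INR_unbounded (4 / eps)) as [N HN].
  assert (HNP : (N + 1 <= 2 ^ (N + 1))%nat).
  { clear. induction N; simpl in *; lia. }
  destruct (HA N) as [c [C HC]].
  set (P := (2 ^ (N + 1))%nat) in *.
  assert (HP : 4 / eps < INR P). { apply Rlt_le_trans with (INR N); auto. apply le_INR; lia. }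
  destruct (INR_unbounded (4 * INR C / eps)) as [M HM].
  assert (Heps := cond_pos eps).
  assert (Key : forall k, (M <= k)%nat -> Rabs (rho_seq X k - INR c / INR P) < eps / 2).
  { intros k Hk. unfold rho_seq, rho.
    eapply Rle_lt_trans. apply real_bound; [lia|lia|apply HC|apply HC].
    assert (1 / INR P < eps / 4).
    { apply Rmult_lt_reg_r with (INR P * 4 / eps). { apply Rdiv_lt_0_compat; [|lra]. assert (0 < INR P) by (apply lt_0_INR; lia). lra. }
      replace (1 / INR P * (INR P * 4 / eps)) with (4 / eps) by (field; split; [lra|apply not_0_INR; lia]).
      replace (eps / 4 * (INR P * 4 / eps)) with (INR P) by (field; lra). auto. }
    assert (INR C / INR (S k) < eps / 4).
    { assert (0 < INR (S k)) by (apply lt_0_INR; lia).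
      assert (INR M <= INR (S k)) by (apply le_INR; lia).
      apply Rmult_lt_reg_r with (INR (S k) * 4 / eps). { apply Rdiv_lt_0_compat; lra. }
      replace (INR C / INR (S k) * (INR (S k) * 4 / eps)) with (4 * INR C / eps) by (field; lra).
      replace (eps / 4 * (INR (S k) * 4 / eps)) with (INR (S k)) by (field; lra). lra. }
    lra. }
  exists M. intros n m Hn Hm. pose proof (Key n Hn) as K1. pose proof (Key m Hm) as K2.
  replace (rho_seq X n - rho_seq X m) with ((rho_seq X n - INR c / INR P) + - (rho_seq X m - INR c / INR P)) by ring.
  eapply Rle_lt_trans. apply Rabs_triang. rewrite Rabs_Ropp. lra.
Qed.

Lemma count_ge1 X a n : X a = true -> (a < n)%nat -> (1 <= count_below X n)%nat.
Proof.
  intros Ha. induction n; intros Hn; [lia|]. rewrite count_S.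
  destruct (Nat.eq_dec a n); [subst; rewrite Ha; lia|]. specialize (IHn ltac:(lia)); lia.
Qed.

Lemma lower_pos e (Y : natset) : (forall k, Y (h e k) = true) -> Rbar_lt 0 (lower_density Y).
Proof.
  intros HY. set (P := (2 ^ (e + 2))%nat).
  assert (HP : (0 < P)%nat) by apply pow_pos.
  assert (Hper : forall x, hb e (x + P) = hb e x).
  { intros x. rewrite <- (hb_per e 1 x). f_equal. unfold P; lia. }
  assert (Hc : (1 <= count_below (hb e) P)%nat).
  { apply count_ge1 with (h e 0). apply hb_spec; exists 0%nat; auto.
    unfold h, P. rewrite pow_e2. pose proof (pow_pos (e+1)). lia. }
  assert (Hm : forall n, (count_below (hb e) n <= count_below Y n)%nat).
  { intros n. apply count_mono. intros x Hx. apply hb_spec in Hx. destruct Hx as [k ->]; auto. }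
  unfold lower_density.
  assert (Hpos : 0 < 1 / (2 * INR P)). { assert (0 < INR P) by (apply lt_0_INR; lia). apply Rdiv_lt_0_compat; lra. }
  apply Rbar_lt_le_trans with (Finite (1 / (2 * INR P))); [simpl; auto|].
  rewrite <- (LimInf_seq_const (1 / (2 * INR P))). apply LimInf_le.
  exists (2 * P * P)%nat. intros k Hk. unfold rho_seq, rho.
  destruct (periodic_bound (hb e) P HP Hper (S k)) as [_ H2].
  specialize (Hm (S k)).
  assert (Hnat : (S k <= 2 * P * count_below Y (S k))%nat) by nia.
  apply le_INR in Hnat. rewrite mult_INR, mult_INR in Hnat. simpl (INR 2) in Hnat.
  assert (0 < INR P) by (apply lt_0_INR; lia).
  assert (0 < INR (S k)) by (apply lt_0_INR; lia).
  apply Rmult_le_reg_r with (2 * INR P * INR (S k)); [nra|].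
  replace (1 / (2 * INR P) * (2 * INR P * INR (S k))) with (INR (S k)) by (field; lra).
  replace (INR (count_below Y (S k)) / INR (S k) * (2 * INR P * INR (S k)))
    with (2 * INR P * INR (count_below Y (S k))) by (field; lra). lra.
Qed.

Lemma h_inj e k e' k' : h e k = h e' k' -> e = e' /\ k = k'.
Proof.
  intros H.
  assert (E : e = e').
  { destruct (lt_eq_lt_dec e e') as [[Hlt|Heq]|Hlt]; auto; exfalso.
    - assert (Hb : hb e (h e k) = true) by (apply hb_spec; eauto).
      assert (Hd : dN (e + 1) (h e' k') = true) by (apply dN_h; lia).
      rewrite <- H in Hd. unfold hb, dN in *. apply Nat.eqb_eq in Hb, Hd.
      replace (e + 1 + 1)%nat with (e + 2)%nat in Hd by lia. rewrite Hd in Hb.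
      pose proof (pow_pos (e + 1)); lia.
    - assert (Hb : hb e' (h e' k') = true) by (apply hb_spec; eauto).
      assert (Hd : dN (e' + 1) (h e k) = true) by (apply dN_h; lia).
      rewrite H in Hd. unfold hb, dN in *. apply Nat.eqb_eq in Hb, Hd.
      replace (e' + 1 + 1)%nat with (e' + 2)%nat in Hd by lia. rewrite Hd in Hb.
      pose proof (pow_pos (e' + 1)); lia. }
  subst e'. split; auto. apply Nat.le_antisymm; apply (h_le e); lia.
Qed.

Lemma Aset_iff x : Aset x = true <-> Good Q x.
Proof. unfold Aset. destruct (excluded_middle_informative (Good Q x)); split; auto; discriminate. Qed.

Theorem mainTheorem10 :
  exists A : natset,
    ce A /\ has_density A /\
    (forall B : natset, Pi01 B -> subset B A ->
       Rbar_lt (Finite 0) (lower_density (setminus A B)) /\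
       Rbar_lt (Finite 0) (dens_dist A B)).
Proof.
  exists Aset. split; [apply Aset_ce|]. split.
  { apply density_from_approx. intros N. apply (approx Q Aset Aset_iff N). }
  intros B [p Hp] Hsub. set (e := encode p).
  assert (HQ : forall j, Q e j).
  { intros j. apply NNPP. intros HnQ.
    assert (HB : B (h e j) = true).
    { apply Hp. intros m Hm. apply HnQ. unfold e. apply Q_iff. exists m; auto. }
    apply Hsub, Aset_iff in HB. apply HnQ. apply (HB e j eq_refl j); lia. }
  assert (HA : forall k, Aset (h e k) = true).
  { intros k. apply Aset_iff. intros e' k' Hk j Hj. apply h_inj in Hk. destruct Hk; subst; auto. }
  assert (HBf : forall k, B (h e k) = false).
  { intros k. destruct (B (h e k)) eqn:E; auto. exfalso.
    destruct (Q_iff p k) as [H1 _]. destruct (H1 (HQ k)) as [m Hm].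
    exact (proj1 (Hp _) E m Hm). }
  split.
  - apply (lower_pos e). intros k. unfold setminus. rewrite HA, HBf. reflexivity.
  - unfold dens_dist. apply (lower_pos e). intros k. unfold symdiff. rewrite HA, HBf. reflexivity.
Qed.
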